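(* Let $G$ be a graph with no induced $P_7$, $C_4$ or $C_6$, and let $(B_1,\dots,B_5)$ be a nice blowup of $C_5$ in $G$. Then: (1) for each $i$, the vertices of $B_i$ can be ordered $b_i^1,\dots,b_i^{|B_i|}$ so that $N_{B_{i-1}\cup B_{i+1}}(b_i^1)\subseteq N_{B_{i-1}\cup B_{i+1}}(b_i^2)\subseteq\cdots\subseteq N_{B_{i-1}\cup B_{i+1}}(b_i^{|B_i|})$; (2) for each $i$, there is a vertex in $B_i$ complete to $B_{i-1}\cup B_{i+1}$; in particular, each vertex of $B_{i-1}$ and each vertex of $B_{i+1}$ have a common neighbor in $B_i$.
   Context: Indices modulo $5$. A tuple $(B_1,\dots,B_5)$ of subsets of $V(G)$ is a nice blowup of $C_5$ if: each $B_i$ is a clique and the $B_i$ are pairwise disjoint; every vertex of $B_i$ has a neighbor in $B_{i-1}$ and in $B_{i+1}$; $B_i$ is anticomplete to $B_{i+2}$; and there are no $a\in B_i$, distinct $b,c\in B_{i+1}$, $d\in B_{i+2}$ with $G[\{a,b,c,d\}]\cong P_4$. For $S\subseteq V(G)$ and a vertex $v$, $N_S(v)$ is the set of neighbors of $v$ in $S$. A vertex is complete to a set if it is adjacent to all its vertices. *)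

(* Defs.v *)
From mathcomp Require Import all_boot.
Set Implicit Arguments. Unset Strict Implicit. Unset Printing Implicit Defensive.

(* A simple graph: vertex set T (finite), adjacency e (assumed symmetric, irreflexive). *)

Definition path_rel (k : nat) : rel 'I_k :=
  fun i j => (i.+1 == j :> nat) || (j.+1 == i :> nat).
Definition cycle_rel (k : nat) : rel 'I_k :=
  fun i j => path_rel i j
             || ((i == 0 :> nat) && (j == k.-1 :> nat))
             || ((j == 0 :> nat) && (i == k.-1 :> nat)).

Definition has_induced (T : finType) (e : rel T) (k : nat) (H : rel 'I_k) : Prop :=
  exists f : 'I_k -> T, injective f /\ forall i j, e (f i) (f j) = H i j.

Definition induces_on (T : finType) (e : rel T) (k : nat) (H : rel 'I_k)
    (S : {set T}) : Prop :=
  exists f : 'I_k -> T,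
    [/\ injective f, f @: setT = S & forall i j, e (f i) (f j) = H i j].

Definition nxt (i : 'I_5) : 'I_5 := inord (i.+1 %% 5).
Definition prv (i : 'I_5) : 'I_5 := inord ((i + 4) %% 5).

Definition N_in (T : finType) (e : rel T) (S : {set T}) (v : T) : {set T} :=
  [set y in S | e v y].

Definition nice_blowup_C5 (T : finType) (e : rel T) (B : 'I_5 -> {set T}) : Prop :=
  (forall i, B i != set0) /\
  [/\ (forall i x y, x \in B i -> y \in B i -> x != y -> e x y),
      (forall i j, i != j -> [disjoint B i & B j]),
      (forall i x, x \in B i ->
         (exists2 y, y \in B (prv i) & e x y) /\ (exists2 y, y \in B (nxt i) & e x y)),
      (forall i x y, x \in B i -> y \in B (nxt (nxt i)) -> ~~ e x y)
    & (forall i a b c d, a \in B i -> b \in B (nxt i) -> c \in B (nxt i) -> b != c ->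
         d \in B (nxt (nxt i)) -> ~ induces_on e (@path_rel 4) [set a; b; c; d])].

(* Main.v *)
Require Import Defs.
From mathcomp Require Import all_boot.

Ltac ic := case => -[|[|[|[|[|m]]]]] Hm //; rewrite /nxt /prv; apply/eqP; rewrite //= -val_eqE /= ?inordK.
Ltac ic2 := case => -[|[|[|[|[|m]]]]] Hm //; rewrite /nxt /prv; rewrite //= -val_eqE /= ?inordK.
Lemma np (i : 'I_5) : nxt (prv i) = i. Proof. by move: i; ic. Qed.
Lemma pn (i : 'I_5) : prv (nxt i) = i. Proof. by move: i; ic. Qed.
Lemma nnp (i : 'I_5) : nxt (nxt (prv i)) = nxt i. Proof. by move: i; ic. Qed.
Lemma pi_ (i : 'I_5) : prv i != i. Proof. by move: i; ic2. Qed.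
Lemma ni_ (i : 'I_5) : nxt i != i. Proof. by move: i; ic2. Qed.
Lemma pn_ (i : 'I_5) : prv i != nxt i. Proof. by move: i; ic2. Qed.



Section G.
Variables (T : finType) (e : rel T).
Hypotheses (sym : symmetric e) (irr : irreflexive e).

Lemma induced4 (a b c d : T) (H : rel 'I_4) :
  uniq [:: a; b; c; d] ->
  (forall i j : 'I_4, e (nth a [:: a; b; c; d] i) (nth a [:: a; b; c; d] j) = H i j) ->
  has_induced e H /\ induces_on e H [set a; b; c; d].
Proof.
move=> U E.
have inj : injective (fun i : 'I_4 => nth a [:: a; b; c; d] i).
  by move=> i j /eqP; rewrite nth_uniq // => /eqP /val_inj.
split; first by exists (fun i : 'I_4 => nth a [:: a; b; c; d] i).
exists (fun i : 'I_4 => nth a [:: a; b; c; d] i); split => //.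
apply/setP => z; rewrite !inE; apply/imsetP/idP.
  case=> -[[|[|[|[|k]]]] Hk] _ -> //=; rewrite ?eqxx ?orbT //.
rewrite -!orbA => /or4P[] /eqP ->.
- by exists (@Ordinal 4 0 isT).
- by exists (@Ordinal 4 1 isT).
- by exists (@Ordinal 4 2 isT).
- by exists (@Ordinal 4 3 isT).
Qed.

Lemma P4_of a b c d : uniq [:: a; b; c; d] -> e a b -> e b c -> e c d ->
  ~~ e a c -> ~~ e a d -> ~~ e b d -> induces_on e (@path_rel 4) [set a; b; c; d].
Proof.
move=> U ab bc cd ac ad bd; suff E : forall i j : 'I_4, e (nth a [:: a; b; c; d] i) (nth a [:: a; b; c; d] j) = path_rel i j by case: (@induced4 a b c d _ U E).
move=> [[|[|[|[|k]]]] Hk] [[|[|[|[|l]]]] Hl] //=; rewrite ?irr //;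
first [ by rewrite ?ab ?bc ?cd ?(negbTE ac) ?(negbTE ad) ?(negbTE bd)
      | by rewrite sym ?ab ?bc ?cd ?(negbTE ac) ?(negbTE ad) ?(negbTE bd) ].
Qed.

Lemma C4_of a b c d : uniq [:: a; b; c; d] -> e a b -> e b c -> e c d -> e d a ->
  ~~ e a c -> ~~ e b d -> has_induced e (@cycle_rel 4).
Proof.
move=> U ab bc cd da ac bd; suff E : forall i j : 'I_4, e (nth a [:: a; b; c; d] i) (nth a [:: a; b; c; d] j) = cycle_rel i j by case: (@induced4 a b c d _ U E).
move=> [[|[|[|[|k]]]] Hk] [[|[|[|[|l]]]] Hl] //=; rewrite ?irr //;
first [ by rewrite ?ab ?bc ?cd ?da ?(negbTE ac) ?(negbTE bd)
      | by rewrite sym ?ab ?bc ?cd ?da ?(negbTE ac) ?(negbTE bd) ].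
Qed.

Lemma uniq4 (X : eqType) (a b c d : X) : a != b -> a != c -> a != d -> b != c -> b != d -> c != d ->
  uniq [:: a; b; c; d].
Proof. by move=> ab ac ad bc bd cd; rewrite /= !inE !negb_or ab ac ad bc bd cd. Qed.
End G.

Ltac dt CP CQ PQ irr := solve [ done | rewrite eq_sym; done | exact: CP | exact: CQ | rewrite eq_sym; exact: CP | rewrite eq_sym; exact: CQ | apply: contraNneq (PQ _ _ ltac:(eassumption) ltac:(eassumption)) => ->; by rewrite irr | apply: contraNneq (PQ _ _ ltac:(eassumption) ltac:(eassumption)) => <-; by rewrite irr].

Theorem lemma4p1 (T : finType) (e : rel T) (B : 'I_5 -> {set T}) :
  symmetric e -> irreflexive e ->
  ~ has_induced e (@path_rel 7) ->
  ~ has_induced e (@cycle_rel 4) ->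
  ~ has_induced e (@cycle_rel 6) ->
  nice_blowup_C5 e B ->
  forall i : 'I_5,
    (exists s : seq T,
        [/\ uniq s, (forall x, (x \in s) = (x \in B i)) &
            forall (x0 : T) j k, j <= k -> k < size s ->
              N_in e (B (prv i) :|: B (nxt i)) (nth x0 s j) \subset
              N_in e (B (prv i) :|: B (nxt i)) (nth x0 s k)])
    /\ (exists2 v, v \in B i & forall y, y \in B (prv i) :|: B (nxt i) -> e v y)
    /\ (forall x y, x \in B (prv i) -> y \in B (nxt i) ->
          exists2 z, z \in B i & e z x && e z y).
Proof.
move=> sym irr _ noC4 _ [nz [cl dj nb ac p4]] i.
have dis : forall x y j k, j != k -> x \in B j -> y \in B k -> x != y.
  move=> x y j k jk Hx Hy; apply: contraTneq Hy => <-.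
  by rewrite (disjointFr (dj _ _ jk) Hx).
have PQ : forall x y, x \in B (prv i) -> y \in B (nxt i) -> ~~ e x y.
  by move=> x y Hx Hy; apply: (ac (prv i)) => //; rewrite nnp.
have CP : forall x y, x \in B i -> y \in B (prv i) -> x != y.
  by move=> x y Hx Hy; apply: (dis _ _ _ _ _ Hx Hy); rewrite eq_sym pi_.
have CQ : forall x y, x \in B i -> y \in B (nxt i) -> x != y.
  by move=> x y Hx Hy; apply: (dis _ _ _ _ _ Hx Hy); rewrite eq_sym ni_.
set N := N_in e (B (prv i) :|: B (nxt i)).
have comp : forall b c, b \in B i -> c \in B i -> (N b \subset N c) || (N c \subset N b).
  move=> b c Hb Hc; apply/norP => -[/subsetPn [x Hxb Hxc] /subsetPn [y Hyc Hyb]].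
  have hx : x \in B (prv i) :|: B (nxt i) by move: Hxb; rewrite inE => /andP[].
  have ebx : e b x by move: Hxb; rewrite inE => /andP[].
  have ncx : ~~ e c x by move: Hxc; rewrite inE hx.
  have hy : y \in B (prv i) :|: B (nxt i) by move: Hyc; rewrite inE => /andP[].
  have ecy : e c y by move: Hyc; rewrite inE => /andP[].
  have nby : ~~ e b y by move: Hyb; rewrite inE hy.
  have bc : b != c by apply: contraNneq ncx => <-.
  have ebc : e b c := cl _ _ _ Hb Hc bc.
  have xy : x != y by apply: contraNneq nby => <-.
  move: hx hy; rewrite !inE => /orP[xP|xQ] /orP[yP|yQ].
  - apply: noC4; apply: (@C4_of T e sym irr b x y c).
    + apply: uniq4 => //; dt CP CQ PQ irr.
    + done.
    + exact: cl xP yP xy.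
    + by rewrite sym.
    + by rewrite sym.
    + done.
    + by rewrite sym.
  - apply: (p4 (prv i) x b c y xP); rewrite ?np ?nnp //.
    apply: (@P4_of T e sym irr) => //.
    + apply: uniq4 => //; dt CP CQ PQ irr.
    + by rewrite sym.
    + by rewrite sym.
    + exact: PQ.
  - apply: (p4 (prv i) y c b x yP); rewrite ?np ?nnp 1?eq_sym //.
    apply: (@P4_of T e sym irr) => //.
    + apply: uniq4 => //; dt CP CQ PQ irr.
    + by rewrite sym.
    + by rewrite sym.
    + by rewrite sym.
    + exact: PQ.
  - apply: noC4; apply: (@C4_of T e sym irr b x y c).
    + apply: uniq4 => //; dt CP CQ PQ irr.
    + done.
    + exact: cl xQ yQ xy.
    + by rewrite sym.
    + by rewrite sym.
    + done.
    + by rewrite sym.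
pose r := fun b c => N b \subset N c.
pose s := sort r (enum (B i)).
have rtr : transitive r by move=> y x z; exact: subset_trans.
have rrf : reflexive r by move=> x; exact: subxx.
have srt : sorted r s.
  apply: (@sort_sorted_in _ (mem (B i))).
    by move=> b c Hb Hc; exact: comp.
  by apply/allP => x; rewrite mem_enum.
have mems : forall x, (x \in s) = (x \in B i) by move=> x; rewrite mem_sort mem_enum.
have mono : forall (x0 : T) j k, j <= k -> k < size s -> N (nth x0 s j) \subset N (nth x0 s k).
  move=> x0 j k jk ks.
  by apply: (sorted_leq_nth rtr rrf x0 srt) => //; rewrite inE //; exact: leq_ltn_trans jk ks.
have /set0Pn [c0 Hc0] := nz i.
pose v := nth c0 s (size s).-1.
have s0 : 0 < size s by rewrite (@leq_ltn_trans (index c0 s)) // index_mem mems.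
have vC : v \in B i by rewrite -mems mem_nth // prednK.
have maxv : forall c, c \in B i -> N c \subset N v.
  move=> c Hc; have ci : c \in s by rewrite mems.
  rewrite -(nth_index c0 ci); apply: mono; last by rewrite prednK.
  by rewrite -ltnS prednK // index_mem.
have compl : forall y, y \in B (prv i) :|: B (nxt i) -> e v y.
  move=> y hy.
  have [z Hz ezy] : exists2 z, z \in B i & e y z.
    move: hy; rewrite inE => /orP[yP|yQ].
    - by have [_ [z]] := nb _ _ yP; rewrite np => ??; exists z.
    - by have [[z]] := nb _ _ yQ; rewrite pn => ??; exists z.
  have : y \in N z by rewrite inE hy sym.
  by move/(subsetP (maxv z Hz)); rewrite inE hy.
split; first by exists s; split => //; rewrite sort_uniq enum_uniq.
split; first by exists v.
move=> x y Hx Hy; exists v => //.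
by rewrite !compl // inE ?Hx ?Hy ?orbT.
Qed.
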